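(* Let $p\in\mathcal H(n,d)$ and suppose $p$ is affine in $x_n$, i.e. $p(x',x_n)=a(x')+x_n b(x')$ for some polynomials $a,b$ in $x'=(x_1,\dots,x_{n-1})$. Then $p\in\mathcal W$.
   Context: Write $s(x)=\sum_{j=1}^n x_j$. $\mathcal H(n,d)$ is the set of real polynomials in $x_1,\dots,x_n$ of total degree exactly $d$, with all coefficients nonnegative, such that $p(x)=1$ whenever $s(x)=1$. $\mathcal W$ is the set of polynomials obtainable from the constant polynomial $1$ by finitely many applications of operations of the form $g\mapsto g-u+s\,u$, where at each step $u$ is a polynomial such that both $u$ and $g-u$ have nonnegative coefficients. *)

(* Defs.v *)
From HB Require Import structures.
From mathcomp Require Import all_boot all_order all_algebra.
From mathcomp Require Import reals.
From mathcomp Require Import mpoly.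
Set Implicit Arguments. Unset Strict Implicit. Unset Printing Implicit Defensive.
Import Order.TTheory GRing.Theory Num.Theory.
Local Open Scope ring_scope.

Definition nonneg_coeffs (R : realType) (n : nat) (p : {mpoly R[n]}) : Prop :=
  forall m : 'X_{1..n}, 0 <= p@_m.

Definition spoly (R : realType) (n : nat) : {mpoly R[n]} := \sum_(i < n) 'X_i.

(* H(n,d): total degree exactly d, nonnegative coefficients,
   p(x) = 1 whenever s(x) = 1 (x real). *)
Definition inH (R : realType) (n d : nat) (p : {mpoly R[n]}) : Prop :=
  [/\ msize p = d.+1, nonneg_coeffs p &
      forall x : 'I_n -> R, \sum_(i < n) x i = 1 -> p.@[x] = 1].

Inductive inW (R : realType) (n : nat) : {mpoly R[n]} -> Prop :=
| inW_one : inW 1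
| inW_step (g u : {mpoly R[n]}) :
    inW g -> nonneg_coeffs u -> nonneg_coeffs (g - u) ->
    inW (g - u + spoly R n * u).

(* Main.v *)
Require Import Defs.
From HB Require Import structures.
From mathcomp Require Import all_boot all_order all_algebra.
From mathcomp Require Import reals.
From mathcomp Require Import mpoly.
From mathcomp Require Import ring.
Import Order.TTheory GRing.Theory Num.Theory.
Local Open Scope ring_scope.
Set Implicit Arguments. Unset Strict Implicit. Unset Printing Implicit Defensive.
Section Aux.
Variable R : realType.
Local Notation widen := (widen_ord (leqnSn _)).

Lemma sum_bmnm_eq N K (P : pred 'X_{1..N}) (G : 'X_{1..N} -> R) m :
  \sum_(mm : 'X_{1..N < K} | P mm) G mm * (mm == m :> 'X_{1..N})%:R
  = if (mdeg m < K)%N && P m then G m else 0.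
Proof.
case: ifP => [/andP[H Pm]|H].
  rewrite (bigD1 (BMultinom H)) //= eqxx mulr1 big1 ?addr0 // => mm /andP[_ ne].
  case e: (_ == _); last by rewrite mulr0.
  have emm : mm = BMultinom H by apply: val_inj; exact/eqP.
  by move: ne; rewrite emm eqxx.
apply: big1 => mm Pmm; case e: (_ == _); last by rewrite mulr0.
by move: H; rewrite -(eqP e) bmdeg Pmm.
Qed.

Lemma coef_bsum N K (P : pred 'X_{1..N}) (G : 'X_{1..N} -> R) m :
  (\sum_(mm : 'X_{1..N < K} | P mm) G mm *: 'X_[mm])@_m
  = if (mdeg m < K)%N && P m then G m else 0.
Proof.
rewrite raddf_sum /= -sum_bmnm_eq; apply: eq_bigr => mm _.
by rewrite mcoeffZ mcoeffX.
Qed.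

Definition shr n (m : 'X_{1..n.+1}) : 'X_{1..n} := [multinom m (widen i) | i < n].

Definition cpart n (q : {mpoly R[n.+1]}) K k : {mpoly R[n]} :=
  \sum_(mm : 'X_{1..n.+1 < K} | bmnm mm ord_max == k) q@_mm *: 'X_[shr mm].

Lemma shr_inj n (m1 m2 : 'X_{1..n.+1}) :
  shr m1 = shr m2 -> m1 ord_max = m2 ord_max -> m1 = m2.
Proof.
move=> e el; apply/mnmP => i; case: (unliftP ord_max i) => [j ->|->] //.
have := congr1 (fun m : 'X_{1..n} => m j) e; rewrite /shr !mnmE.
by have -> : lift ord_max j = widen j by apply: val_inj; rewrite /= /bump leqNgt ltn_ord.
Qed.

Lemma mlast_le n (m : 'X_{1..n.+1}) : (m ord_max <= mdeg m)%N.
Proof. by rewrite mdegE (bigD1 ord_max) //= leq_addr. Qed.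

Lemma coef_split n (q : {mpoly R[n.+1]}) m :
  q@_m = (cpart q (msize q).+1 (m ord_max))@_(shr m).
Proof.
rewrite /cpart raddf_sum /=.
rewrite (eq_bigr (fun mm : 'X_{1..n.+1 < (msize q).+1} => q@_mm * (mm == m :> 'X_{1..n.+1})%:R)); last first.
  move=> mm /eqP e; rewrite mcoeffZ mcoeffX.
  case: (eqVneq (bmnm mm) m) => [->|ne]; first by rewrite !eqxx.
  have : shr mm != shr m by apply: contra_neq ne => h; exact: shr_inj.
  by move/negbTE => ->.
have := @sum_bmnm_eq _ (msize q).+1 (fun mm : 'X_{1..n.+1} => mm ord_max == m ord_max) (fun mm => q@_mm) m.
move=> /= ->; rewrite eqxx andbT; case: ifP => // /negbT; rewrite -leqNgt => H.
by apply/eqP; rewrite mcoeff_eq0 msize_mdeg_ge // ltnW.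
Qed.

Lemma eval_split n (q : {mpoly R[n.+1]}) (x : 'I_n.+1 -> R) :
  q.@[x] = \sum_(k < (msize q).+1)
     (cpart q (msize q).+1 k).@[fun i => x (widen i)] * x ord_max ^+ k.
Proof.
rewrite {1}(mpolywE (leqnSn (msize q))) raddf_sum /=.
under [RHS]eq_bigr do rewrite /cpart raddf_sum /= mulr_suml.
rewrite (exchange_big_dep xpredT) //=.
apply: eq_bigr => mm _.
have lt : (bmnm mm ord_max < (msize q).+1)%N by apply: leq_ltn_trans (mlast_le _) (bmdeg mm).
rewrite (big_pred1 (inord (bmnm mm ord_max))); last first.
  by move=> k /=; rewrite -val_eqE /= inordK // eq_sym.
rewrite inordK // !mevalZ !mevalX big_ord_recr /= -mulrA; congr (_ * (_ * _)).
by apply: eq_bigr => i _; rewrite /shr mnmE.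
Qed.

Lemma univ0 K (c : nat -> R) :
  (forall t : R, \sum_(k < K) c k * t ^+ k = 0) -> forall k, (k < K)%N -> c k = 0.
Proof.
move=> H; set P := \poly_(k < K) c k.
have P0 : P = 0.
  apply: (@roots_geq_poly_eq0 _ _ [seq i%:R | i <- iota 0 K]).
  - by apply/allP => r /mapP [i _ ->]; rewrite /root horner_poly; apply/eqP; exact: H.
  - by rewrite map_inj_uniq ?iota_uniq // => i j /eqP; rewrite eqr_nat => /eqP.
  - by rewrite size_map size_iota; exact: size_poly.
move=> k lt; have := congr1 (fun p : {poly R} => p`_k) P0.
by rewrite coef_poly lt coef0.
Qed.

Lemma mpoly_eval0 n (q : {mpoly R[n]}) : (forall x, q.@[x] = 0) -> q = 0.
Proof.
elim: n q => [|n IH] q H.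
  have hs : (msize q <= 1)%N.
    by rewrite msizeE; apply/bigmax_leqP_seq => m _ _; rewrite mdegE big_ord0.
  move: (H (fun i => 0)); rewrite (msize1_polyC hs) mevalC => ->.
  by rewrite raddf0.
apply/mpolyP => m; rewrite mcoeff0 coef_split.
case: (ltnP (m ord_max) (msize q).+1) => lt; last first.
  rewrite /cpart big_pred0 ?mcoeff0 // => mm; apply/negbTE.
  rewrite neq_ltn; apply/orP; left; apply: leq_ltn_trans (mlast_le _) _.
  exact: leq_trans (bmdeg mm) lt.
suff -> : cpart q (msize q).+1 (m ord_max) = 0 by rewrite mcoeff0.
apply: IH => y.
apply: (univ0 (c := fun k => (cpart q (msize q).+1 k).@[y])) lt => t.
pose xt (i : 'I_n.+1) := if unlift ord_max i is Some j then y j else t.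
have := H xt; rewrite eval_split {2}/xt unlift_none => h; apply: (etrans _ h).
apply: eq_bigr => k _; congr (_ * _); apply: meval_eq => i /=; rewrite /xt.
have -> : widen i = lift ord_max i by apply: val_inj; rewrite /= /bump leqNgt ltn_ord.
by rewrite liftK.
Qed.


Lemma meval_mwiden n (a : {mpoly R[n]}) (x : 'I_n.+1 -> R) :
  (mwiden a).@[x] = a.@[fun i => x (widen i)].
Proof.
rewrite {1}(mpolyE a) (raddf_sum (@mwiden n R)) raddf_sum /= mevalE; apply: eq_bigr => m _.
rewrite mwidenZ mevalZ mwidenX mevalX big_ord_recr /= mnmwiden_ordmax expr0 mulr1.
by congr (_ * _); apply: eq_bigr => i _; rewrite mnmwiden_widen.
Qed.

Lemma coef_mwiden_last n (a : {mpoly R[n]}) (m : 'X_{1..n.+1}) :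
  m ord_max != 0%N -> (mwiden a)@_m = 0.
Proof.
move=> H; rewrite (mpolyE a) (raddf_sum (@mwiden n R)) raddf_sum /= big1 // => mm _.
rewrite mwidenZ mcoeffZ mwidenX mcoeffX; case: eqP => [e|]; last by rewrite mulr0.
by move: H; rewrite -e mnmwiden_ordmax.
Qed.

Lemma spoly_split n : spoly R n.+1 = mwiden (spoly R n) + 'X_ord_max.
Proof.
rewrite /spoly big_ord_recr /= (raddf_sum (@mwiden n R)); congr (_ + _).
apply: eq_bigr => i _. by rewrite -mnmwiden1 -mwidenX.
Qed.

Lemma spoly_eval n (x : 'I_n -> R) : (spoly R n).@[x] = \sum_i x i.
Proof. by rewrite /spoly raddf_sum; apply: eq_bigr => i _; exact: mevalXU. Qed.

Lemma spoly_coef0 N : (spoly R N)@_0 = 0.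
Proof.
rewrite /spoly raddf_sum /= big1 // => i _; rewrite mcoeffX.
case e: ((U_(i))%MM == 0%MM) => //; have := congr1 mdeg (eqP e).
by rewrite mdeg1 mdeg0.
Qed.

Lemma spoly_nn N : nonneg_coeffs (spoly R N).
Proof.
move=> m; rewrite /spoly raddf_sum /=; apply: sumr_ge0 => i _.
by rewrite mcoeffX ler0n.
Qed.

Lemma nnM N (p q : {mpoly R[N]}) :
  nonneg_coeffs p -> nonneg_coeffs q -> nonneg_coeffs (p * q).
Proof.
move=> hp hq m; rewrite mcoeffM; apply: sumr_ge0 => k _; exact: mulr_ge0.
Qed.

Lemma lt_sum_aux a b c : c = (a + b)%N -> (0 < a)%N -> (b < c)%N.
Proof. by move=> -> h; rewrite -{1}(add0n b) ltn_add2r. Qed.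

Lemma spolyM_low N (D : {mpoly R[N]}) m :
  (forall k, (mdeg k < mdeg m)%N -> D@_k = 0) -> (spoly R N * D)@_m = 0.
Proof.
move=> H; rewrite mcoeffM; apply: big1 => k /eqP e.
case: (eqVneq (bmnm k.1) 0%MM) => [e1|ne]; first by rewrite e1 spoly_coef0 mul0r.
have hd : mdeg m = (mdeg k.1 + mdeg k.2)%N by have := congr1 mdeg e; rewrite mdegD.
rewrite H ?mulr0 //; apply: (@lt_sum_aux (mdeg k.1)) hd _; rewrite lt0n mdeg_eq0.
exact: ne.
Qed.

Section Trunc.
Variables (N : nat) (B : {mpoly R[N]}).

Definition T j := \sum_(mm : 'X_{1..N < msize B} | (mdeg mm < j)%N) B@_mm *: 'X_[mm].

Lemma coefT j m : (T j)@_m = if (mdeg m < j)%N then B@_m else 0.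
Proof.
have := @coef_bsum _ (msize B) (fun mm => (mdeg mm < j)%N) (fun mm => B@_mm) m.
move=> /= ->; case: (ltnP (mdeg m) (msize B)) => //= H.
by case: ifP => // _; apply/esym/eqP; rewrite mcoeff_eq0 msize_mdeg_ge.
Qed.

End Trunc.
End Aux.

Local Notation widen := (widen_ord (leqnSn _)).

Unset Implicit Arguments.
Theorem lemma6 (R : realType) (n d : nat) (p : {mpoly R[n.+1]}) :
  inH d p ->
  (exists a b : {mpoly R[n]}, p = mwiden a + 'X_ord_max * mwiden b) ->
  inW p.
Proof.
move=> [_ Hnn Hev] [a [b hp]].
set s' := spoly R n.
have e : a + b - s' * b - 1 = 0.
  apply: mpoly_eval0 => y.
  pose x (i : 'I_n.+1) := if unlift ord_max i is Some j then y j else 1 - \sum_j y j.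
  have xw : (fun i => x (widen i)) =1 y.
    move=> i /=; rewrite /x.
    have -> : widen i = lift ord_max i by apply: val_inj; rewrite /= /bump leqNgt ltn_ord.
    by rewrite liftK.
  have xs : \sum_i x i = 1.
    rewrite big_ord_recr /= {2}/x unlift_none.
    rewrite (eq_bigr (fun i => y i)) ?subrKC // => i _; exact: xw.
  have := Hev x xs; rewrite hp mevalD mevalM mevalXU !meval_mwiden !(meval_eq _ xw).
  rewrite {1}/x unlift_none => h.
  rewrite !mevalB mevalD mevalM meval1 spoly_eval -h; ring.
set B := mwiden b; set s := spoly R n.+1.
have ea : a = 1 - b + s' * b.
  apply/eqP; rewrite -subr_eq0; apply/eqP; rewrite -e; ring.
have ep : p = 1 + (s - 1) * B.
  rewrite hp ea /s spoly_split rmorphD rmorphB rmorphM rmorph1 -/B; ring.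
have BX m : B@_m = p@_(U_(ord_max) + m)%MM.
  rewrite hp mcoeffD coef_mwiden_last; last by rewrite mnmDE mnm1E eqxx.
  by rewrite add0r mulrC mcoeffMX.
have Bnn : nonneg_coeffs B by move=> m; rewrite BX.
have Tnn j : nonneg_coeffs (T B j) by move=> m; rewrite coefT; case: ifP.
have ep' : p = 1 - B + s * B by rewrite ep; ring.
have step j : inW (1 + (s - 1) * T B j).
  elim: j => [|j IH].
    rewrite /T big_pred0 // mulr0 addr0; exact: inW_one.
  have -> : 1 + (s - 1) * T B j.+1 =
    (1 + (s - 1) * T B j) - (T B j.+1 - T B j) + s * (T B j.+1 - T B j) by ring.
  apply: inW_step => //.
    move=> m; rewrite mcoeffB !coefT ltnS.
    by case: ltngtP => h; rewrite ?subrr ?subr0 ?Bnn.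
  have -> : 1 + (s - 1) * T B j - (T B j.+1 - T B j) = 1 - T B j.+1 + s * T B j by ring.
  move=> m; rewrite mcoeffD mcoeffB coefT ltnS.
  case: leqP => h.
    have -> : (s * T B j)@_m = (s * B)@_m.
      apply/eqP; rewrite -subr_eq0 -mcoeffB -mulrBr; apply/eqP.
      apply: spolyM_low => k hk; rewrite mcoeffB coefT (leq_trans hk h) subrr //.
    by rewrite -mcoeffB -mcoeffD -ep'.
  rewrite subr0; apply: addr_ge0; first by rewrite mcoeff1 ler0n.
  apply: nnM => //; exact: spoly_nn.
have -> : p = 1 + (s - 1) * T B (msize B).
  rewrite ep; congr (1 + (s - 1) * _); apply/mpolyP => m; rewrite coefT.
  case: ltnP => // h; apply/eqP; rewrite mcoeff_eq0 msize_mdeg_ge //.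
exact: step.
Qed.
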